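(* Let $D$ be an integral domain, $S$ a multiplicative subset of $D$, and $M$ a torsion-free $D$-module which is a $w$-module. Then: (1) If $M$ is an $S$-SM-module, then $M$ is a $w$-locally $S$-Noetherian module. (2) If $M$ is a $w$-locally $S$-Noetherian module which has finite $w$-character, then $M$ is an $S$-SM-module.
   Context: Let $K$ be the quotient field of $D$; $I_v=(I^{-1})^{-1}$ with $I^{-1}=\{a\in K\mid aI\subseteq D\}$; $\mathrm{GV}(D)$ is the set of finitely generated ideals $J$ with $J_v=D$. For a torsion-free module $N$, $N_w=\{x\in N\otimes K\mid xJ\subseteq N\text{ for some }J\in\mathrm{GV}(D)\}$; $N$ is a $w$-module if $N_w=N$; maximal $w$-ideals are proper ideals $I$ with $I_w=I$ maximal among such. A submodule $N$ of $M$ is $S$-$w$-finite if there exist $s\in S$ and a finitely generated submodule $F$ of $M$ with $Ns\subseteq F_w\subseteq N_w$; $M$ is an $S$-SM-module if every $w$-submodule ($L_w=L$) is $S$-$w$-finite. A submodule is $S$-finite if $Ls\subseteq F\subseteq L$ for some $s\in S$ and finitely generated $F$; a module is $S$-Noetherian if every submodule is $S$-finite. $M$ is $w$-locally $S$-Noetherian if for every maximal $w$-ideal $\mathfrak{m}$ of $D$, $M_{\mathfrak{m}}$ is an $S$-Noetherian $D_{\mathfrak{m}}$-module. With $(aD:M)=\{d\in D\mid Md\subseteq aD\}$, $M$ has finite $w$-character if for each nonzero $a\in M$ with $(aD:M)\neq D$, $(aD:M)$ is contained in only finitely many maximal $w$-ideals of $D$. *)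

(* Defs.v *)
From HB Require Import structures.
From mathcomp Require Import all_boot all_order all_algebra fraction.
Set Implicit Arguments. Unset Strict Implicit. Unset Printing Implicit Defensive.
Import GRing.Theory.
Local Open Scope ring_scope.

(* A torsion-free D-module M is represented (as usual) inside the K-vector
   space V, i.e. as a D-submodule M of V; for a submodule N of M, N (x) K is
   identified with the K-span of N in V. *)

Section WTheory.
Variable D : idomainType.
Local Notation K := {fraction D}.

Definition inK (d : D) : K := @FracField.tofrac D d.

Definition inD (x : K) : Prop := exists d : D, x = inK d.

Definition is_ideal (I : D -> Prop) : Prop :=
  [/\ I 0, (forall x y, I x -> I y -> I (x + y)) &
      (forall r x, I x -> I (r * x))].

Definition fg_ideal (I : D -> Prop) : Prop :=
  exists g : seq D, forall x,
    I x <-> exists r : seq D, x = \sum_(i < size g) r`_i * g`_i.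

Definition invK (A : K -> Prop) : K -> Prop :=
  fun a => forall x, A x -> inD (a * x).

Definition imgK (I : D -> Prop) : K -> Prop :=
  fun x => exists2 d, I d & x = inK d.

Definition vcl (I : D -> Prop) : K -> Prop := invK (invK (imgK I)).

Definition GV (J : D -> Prop) : Prop :=
  fg_ideal J /\ (forall x, vcl J x <-> inD x).

Section Modules.
Variable V : lmodType K.

Definition submod (N : V -> Prop) : Prop :=
  [/\ N 0, (forall x y, N x -> N y -> N (x + y)) &
      (forall (d : D) x, N x -> N (inK d *: x))].

(* K-span of N, i.e. (the image of) N (x) K *)
Definition Kspan (N : V -> Prop) : V -> Prop :=
  fun x => exists (g : seq V) (c : seq K),
    (forall i, (i < size g)%N -> N g`_i) /\
    x = \sum_(i < size g) c`_i *: g`_i.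

Definition wcl (N : V -> Prop) : V -> Prop :=
  fun x => Kspan N x /\
    exists J, GV J /\ forall j, J j -> N (inK j *: x).

Definition is_wmod (N : V -> Prop) : Prop := forall x, wcl N x <-> N x.

Definition Dspan (g : seq V) : V -> Prop :=
  fun x => exists r : seq D, x = \sum_(i < size g) inK r`_i *: g`_i.

Definition subset (A B : V -> Prop) := forall x, A x -> B x.

Definition S_w_finite (S : D -> Prop) (M N : V -> Prop) : Prop :=
  exists s, S s /\ exists g : seq V,
    (forall i, (i < size g)%N -> M g`_i) /\
    (forall n, N n -> wcl (Dspan g) (inK s *: n)) /\
    subset (wcl (Dspan g)) (wcl N).

Definition S_SM (S : D -> Prop) (M : V -> Prop) : Prop :=
  forall L, submod L -> subset L M -> is_wmod L -> S_w_finite S M L.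
End Modules.

(* ideals of D viewed inside K (the regular K-module K^o) *)
Definition w_ideal (P : D -> Prop) : Prop :=
  is_ideal P /\ forall x : K^o, @wcl K^o (imgK P) x <-> imgK P x.

Definition max_w_ideal (P : D -> Prop) : Prop :=
  [/\ w_ideal P, ~ (forall d, P d) &
      forall Q, w_ideal Q -> ~ (forall d, Q d) ->
        (forall d, P d -> Q d) -> forall d, Q d -> P d].

Section Local.
Variable V : lmodType K.

Definition Dloc (P : D -> Prop) : K -> Prop :=
  fun x => exists a b, ~ P b /\ x = inK a / inK b.

Definition Mloc (P : D -> Prop) (M : V -> Prop) : V -> Prop :=
  fun v => exists x b, [/\ M x, ~ P b & v = (inK b)^-1 *: x].

Definition submod_loc (P : D -> Prop) (L : V -> Prop) : Prop :=
  [/\ L 0, (forall x y, L x -> L y -> L (x + y)) &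
      (forall r x, Dloc P r -> L x -> L (r *: x))].

Definition Dlocspan (P : D -> Prop) (g : seq V) : V -> Prop :=
  fun x => exists r : seq K, (forall i, (i < size g)%N -> Dloc P r`_i) /\
    x = \sum_(i < size g) r`_i *: g`_i.

Definition S_noeth_loc (S : D -> Prop) (P : D -> Prop) (M : V -> Prop) : Prop :=
  forall L, submod_loc P L -> subset L (Mloc P M) ->
    exists s, S s /\ exists g : seq V,
      (forall n, L n -> Dlocspan P g (inK s *: n)) /\
      subset (Dlocspan P g) L.

Definition w_loc_S_noeth (S : D -> Prop) (M : V -> Prop) : Prop :=
  forall P, max_w_ideal P -> S_noeth_loc S P M.

Definition colon (a : V) (M : V -> Prop) : D -> Prop :=
  fun d => forall x, M x -> exists e : D, inK d *: x = inK e *: a.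

Definition fin_w_char (M : V -> Prop) : Prop :=
  forall a, M a -> a <> 0 -> ~ (forall d, colon a M d) ->
    exists (n : nat) (f : 'I_n -> D -> Prop),
      forall P, max_w_ideal P -> (forall d, colon a M d -> P d) ->
        exists i, forall d, P d <-> f i d.
End Local.

Definition mult_subset (S : D -> Prop) : Prop :=
  S 1 /\ forall x y, S x -> S y -> S (x * y).
End WTheory.

(* Main.v *)
Require Import Defs.
From HB Require Import structures.
From mathcomp Require Import all_boot all_order all_algebra fraction.
From mathcomp Require boolp classical_sets.
From Stdlib Require Import Classical FunctionalExtensionality PropExtensionality IndefiniteDescription.
Set Implicit Arguments. Unset Strict Implicit. Unset Printing Implicit Defensive.
Import GRing.Theory.
Local Open Scope ring_scope.


Section Basics.
Variable D : idomainType.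
Local Notation K := {fraction D}.

Lemma inK0 : inK (0:D) = 0. Proof. exact: tofrac0. Qed.
Lemma inK1 : inK (1:D) = 1. Proof. exact: tofrac1. Qed.
Lemma inKD (a b : D) : inK (a + b) = inK a + inK b. Proof. exact: tofracD. Qed.
Lemma inKM (a b : D) : inK (a * b) = inK a * inK b. Proof. exact: tofracM. Qed.
Lemma inK_inj (a b : D) : inK a = inK b -> a = b.
Proof. by move=> h; apply/eqP; rewrite -tofrac_eq; apply/eqP. Qed.
Lemma inK_neq0 (a : D) : a != 0 -> inK a != 0.
Proof. by rewrite /inK tofrac_eq0. Qed.
Lemma inK_sum (I : Type) (r : seq I) (F : I -> D) :
  inK (\sum_(i <- r) F i) = \sum_(i <- r) inK (F i).
Proof. exact: rmorph_sum. Qed.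

Lemma inD0 : inD (0 : K). Proof. by exists 0; rewrite inK0. Qed.
Lemma inD1 : inD (1 : K). Proof. by exists 1; rewrite inK1. Qed.
Lemma inDD (x y : K) : inD x -> inD y -> inD (x + y).
Proof. by move=> [a ->] [b ->]; exists (a + b); rewrite inKD. Qed.
Lemma inDM (x y : K) : inD x -> inD y -> inD (x * y).
Proof. by move=> [a ->] [b ->]; exists (a * b); rewrite inKM. Qed.
Lemma inD_inK (d : D) : inD (inK d). Proof. by exists d. Qed.

Lemma scaleKo (a x : K^o) : a *: x = a * x. Proof. by []. Qed.

Definition dspan (g : seq D) : D -> Prop :=
  fun x => exists r : seq D, x = \sum_(i < size g) r`_i * g`_i.

Lemma dspan_ideal (g : seq D) : is_ideal (dspan g).
Proof.
split.
- by exists [::]; rewrite big1 // => i _; rewrite nth_nil mul0r.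
- move=> x y [r1 ->] [r2 ->].
  exists (mkseq (fun i => r1`_i + r2`_i) (size g)).
  rewrite -big_split /=; apply: eq_bigr => i _.
  by rewrite nth_mkseq ?ltn_ord // mulrDl.
- move=> c x [r ->]; exists (mkseq (fun i => c * r`_i) (size g)).
  rewrite mulr_sumr; apply: eq_bigr => i _.
  by rewrite nth_mkseq ?ltn_ord // mulrA.
Qed.

Lemma dspan_gen (g : seq D) z : z \in g -> dspan g z.
Proof.
move=> zg; have hk := zg; rewrite -index_mem in hk.
exists (mkseq (fun i => (i == index z g)%:R) (size g)).
rewrite (bigD1 (Ordinal hk)) //= big1 ?addr0.
  by rewrite nth_mkseq // eqxx mul1r nth_index.
move=> i /eqP neq; rewrite nth_mkseq ?ltn_ord //.
case: eqP => [h|_]; last by rewrite mul0r.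
by exfalso; apply: neq; apply: val_inj.
Qed.

Lemma dspan_min (g : seq D) (Q : D -> Prop) : is_ideal Q ->
  (forall z, z \in g -> Q z) -> forall x, dspan g x -> Q x.
Proof.
move=> [Q0 QD QM] Qg x [r ->]; apply: big_ind => // i _.
by apply: QM; apply: Qg; apply: mem_nth.
Qed.

Lemma dspan_mul (g : seq D) (Q : D -> Prop) d : is_ideal Q ->
  (forall z, z \in g -> Q (z * d)) -> forall x, dspan g x -> Q (x * d).
Proof.
move=> [Q0 QD QM] Qg x [r ->]; rewrite mulr_suml; apply: big_ind => // i _.
by rewrite -mulrA; apply: QM; apply: Qg; apply: mem_nth.
Qed.


Lemma GV_inv (J : D -> Prop) (x : K) : GV J ->
  (forall j, J j -> inD (inK j * x)) -> inD x.
Proof.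
move=> [_ hv] hJ.
have : vcl J 1 by apply/hv; exact: inD1.
move/(_ x); rewrite mul1r; apply.
by move=> z [j Jj ->]; rewrite mulrC; exact: hJ.
Qed.

Lemma GV_of (J : D -> Prop) : fg_ideal J ->
  (forall y, invK (imgK J) y -> inD y) -> GV J.
Proof.
move=> fg h; split=> // x; split.
- move=> hx; have := hx 1; rewrite mulr1; apply.
  by move=> z [j _ ->]; rewrite mul1r; exact: inD_inK.
- by move=> [d ->] y /h [e ->]; rewrite -inKM; exact: inD_inK.
Qed.

Lemma GV_eq (J : D -> Prop) : GV J -> exists g, J = dspan g.
Proof.
move=> [[g hg] _]; exists g; apply: functional_extensionality => x.
by apply: propositional_extensionality; exact: hg.
Qed.

Lemma GV_inv_gen (g : seq D) (x : K) : GV (dspan g) ->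
  (forall z, z \in g -> inD (x * inK z)) -> inD x.
Proof.
move=> hG hz; apply: (GV_inv hG) => j [r ->].
rewrite /inK rmorph_sum mulr_suml; apply: big_ind; [exact: inD0|exact: inDD|].
move=> i _; rewrite rmorphM -mulrA; apply: inDM; first exact: inD_inK.
by rewrite mulrC; apply: hz; exact: mem_nth.
Qed.

Lemma GV_mul (g1 g2 : seq D) : GV (dspan g1) -> GV (dspan g2) ->
  GV (dspan [seq a * b | a <- g1, b <- g2]).
Proof.
move=> h1 h2; apply: GV_of; first by exists [seq a * b | a <- g1, b <- g2].
move=> y hy; apply: (GV_inv_gen h1) => a ag1.
apply: (GV_inv_gen h2) => b bg2.
rewrite -mulrA -inKM; apply: hy; exists (a * b) => //; apply: dspan_gen.
by apply/allpairsP; exists (a, b).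
Qed.

Lemma GV_one : GV (dspan [:: (1 : D)]).
Proof.
apply: GV_of; first by exists [:: 1].
move=> y hy; rewrite -[y]mulr1 -inK1; apply: hy; exists 1 => //.
by apply: dspan_gen; rewrite mem_head.
Qed.

Definition wc (Q : D -> Prop) (d : D) : Prop :=
  exists g, GV (dspan g) /\ forall j, dspan g j -> Q (j * d).

Lemma wc_list (Q : D -> Prop) : is_ideal Q -> forall h : seq D,
  (forall z, z \in h -> wc Q z) ->
  exists g, GV (dspan g) /\ forall x, dspan g x -> forall z, z \in h -> Q (x * z).
Proof.
move=> hQ; have [Q0 QD QM] := hQ; elim=> [|z h IH] hh.
  by exists [:: 1]; split; [exact: GV_one| move=> x _ z].
have [g1 [G1 H1]] := hh z (mem_head _ _).
have [g2 [G2 H2]] : exists g, GV (dspan g) /\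
    forall x, dspan g x -> forall z, z \in h -> Q (x * z).
  by apply: IH => w wh; apply: hh; rewrite in_cons wh orbT.
exists [seq a * b | a <- g1, b <- g2]; split; first exact: GV_mul.
move=> x hx w; rewrite in_cons => /orP [/eqP -> | wh].
- apply: (dspan_mul hQ) hx => c /allpairsP [[a b] [ag bg ->]] /=.
  rewrite [a * b]mulrC -mulrA; apply: QM; apply: H1; exact: dspan_gen.
- apply: (dspan_mul hQ) hx => c /allpairsP [[a b] [ag bg ->]] /=.
  rewrite -mulrA; apply: QM; apply: H2 => //; exact: dspan_gen.
Qed.

Lemma wc_sup (Q : D -> Prop) d : is_ideal Q -> Q d -> wc Q d.
Proof.
move=> [_ _ QM] Qd; exists [:: 1]; split; first exact: GV_one.
by move=> j _; apply: QM.
Qed.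

Lemma wc_ideal (Q : D -> Prop) : is_ideal Q -> is_ideal (wc Q).
Proof.
move=> hQ; have [Q0 QD QM] := hQ; split.
- by apply: wc_sup.
- move=> x y hx hy.
  have [g [G H]] : exists g, GV (dspan g) /\
      forall j, dspan g j -> forall z, z \in [:: x; y] -> Q (j * z).
    by apply: wc_list => // z; rewrite !inE => /orP [/eqP ->|/eqP ->].
  exists g; split=> // j hj; rewrite mulrDr; apply: QD; apply: H => //;
  by rewrite !inE eqxx ?orbT.
- move=> r x [g [G H]]; exists g; split=> // j hj.
  by rewrite mulrCA; apply: QM; apply: H.
Qed.

Lemma wc_wc (Q : D -> Prop) : is_ideal Q -> wc (wc Q) 1 -> wc Q 1.
Proof.
move=> hQ [g [G hg]].
have [g' [G' H']] : exists g', GV (dspan g') /\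
    forall x, dspan g' x -> forall z, z \in g -> Q (x * z).
  apply: wc_list => // z zg; have := hg z (dspan_gen zg); by rewrite mulr1.
exists [seq a * b | a <- g', b <- g]; split; first exact: GV_mul.
move=> x hx; apply: (dspan_mul hQ) hx => c /allpairsP [[a b] [ag bg ->]] /=.
rewrite mulr1; apply: H' => //; exact: dspan_gen.
Qed.

Lemma Kspan_self (V : lmodType K) (N : V -> Prop) x : N x -> Kspan N x.
Proof.
move=> Nx; exists [:: x], [:: 1]; split.
  by move=> i; rewrite ltnS leqn0 => /eqP ->.
by rewrite big_ord1 scale1r.
Qed.

Lemma wideal_GV (Q J : D -> Prop) : w_ideal Q -> GV J ->
  (forall j, J j -> Q j) -> (forall d, Q d) \/ (forall j, J j -> j = 0).
Proof.
move=> [[Q0 QD QM] hw] hG hJ.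
case: (classic (exists j, J j /\ j <> 0)) => [[j [Jj nj]]|h]; last first.
  by right=> j Jj; apply: NNPP => nj; apply: h; exists j.
left=> d.
have Q1 : Q 1.
  have : imgK Q (1 : K^o).
    apply/hw; split.
    - exists [:: (inK j : K^o)], [:: (inK j)^-1]; split.
        by move=> i; rewrite ltnS leqn0 => /eqP ->; exists j; [apply: hJ|].
      by rewrite big_ord1 /= scaleKo mulVf // inK_neq0 //; apply/eqP.
    - exists J; split => // j' Jj'; rewrite scaleKo mulr1.
      by exists j'; [apply: hJ|].
  by move=> [q Qq /esym]; rewrite -inK1 => /inK_inj <-.
by rewrite -[d]mulr1; apply: QM.
Qed.

Lemma nonfield_GV (J : D -> Prop) : ~ (forall x : K, inD x) -> GV J ->
  exists j, J j /\ j <> 0.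
Proof.
move=> nf hG; apply: NNPP => h; apply: nf => x.
have : vcl J 1 by apply/(proj2 hG); exact: inD1.
move/(_ x); rewrite mul1r; apply => z [j Jj ->].
have -> : j = 0 by apply: NNPP => nj; apply: h; exists j.
by rewrite inK0 mulr0; exact: inD0.
Qed.

Lemma field_ideal0 (P : D -> Prop) d : (forall x : K, inD x) -> is_ideal P ->
  ~ (forall d, P d) -> P d -> d = 0.
Proof.
move=> hf [P0 PD PM] np Pd; apply: NNPP => nd; apply: np => e.
have [c hc] := hf (inK d)^-1.
have cd : c * d = 1.
  apply: inK_inj; rewrite inKM -hc inK1 mulVf //; apply: inK_neq0; exact/eqP.
by rewrite -[e]mulr1 -cd; apply: (PM); apply: (PM).
Qed.

Lemma field_max0 : (forall x : K, inD x) -> max_w_ideal (fun d : D => d = 0).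
Proof.
move=> hf.
have hI : is_ideal (fun d : D => d = 0).
  by split=> // [x y -> ->|r x ->]; rewrite ?addr0 ?mulr0.
split.
- split=> // x; split.
  + move=> [[g [c [hg ->]]] _]; exists 0 => //; rewrite inK0 big1 // => i _.
    by have [d -> ->] := hg i (ltn_ord i); rewrite inK0 scaler0.
  + move=> [d -> ->]; split.
      by exists [::], [::]; split; [case| rewrite big_ord0 inK0].
    exists (dspan [:: 1]); split; first exact: GV_one.
    by move=> j _; rewrite inK0 scaleKo mulr0; exists 0; rewrite ?inK0.
- by move/(_ 1)/eqP; rewrite oner_eq0.
- move=> Q [hQ _] nQ _ d Qd; exact: (field_ideal0 hf hQ nQ Qd).
Qed.


Definition good (I Q : D -> Prop) :=
  [/\ is_ideal Q, (forall d, I d -> Q d) & ~ wc Q 1].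

Lemma zorn_max (I : D -> Prop) : is_ideal I -> ~ wc I 1 ->
  exists P, max_w_ideal P /\ forall d, I d -> P d.
Proof.
move=> hI nI.
pose T := {Q : D -> Prop | good I Q}.
pose R := fun A B : T => boolp.asbool (forall d, sval A d -> sval B d).
have gI : good I I by split.
have [t tmax] : exists t : T, classical_sets.premaximal R t.
  apply: (classical_sets.ZL_preorder (exist _ I gI)).
  - by move=> t; apply/boolp.asboolP.
  - by move=> r s t /boolp.asboolP h1 /boolp.asboolP h2; apply/boolp.asboolP => d /h1 /h2.
  - move=> A Atot.
    pose U := fun d => I d \/ exists Q : T, A Q /\ sval Q d.
    have chain : forall h : seq D, (forall z, z \in h -> U z) ->
        exists B, (B = I \/ exists Q : T, A Q /\ B = sval Q) /\
                  forall z, z \in h -> B z.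
      elim=> [|z h IH] hh; first by exists I; split; [left|].
      have [B [hB Bh]] : exists B, (B = I \/ exists Q : T, A Q /\ B = sval Q) /\
                  forall z, z \in h -> B z.
        by apply: IH => w wh; apply: hh; rewrite in_cons wh orbT.
      case: (hh z (mem_head _ _)) => [Iz | [Q [AQ Qz]]].
      + exists B; split => // w; rewrite in_cons => /orP [/eqP -> | /Bh //].
        case: hB => [-> // | [Q [_ ->]]]; by case: (svalP Q) => _ QI _; apply: QI.
      + case: hB => [EB | [Q' [AQ' EB]]].
        * exists (sval Q); split; first by right; exists Q.
          move=> w; rewrite in_cons => /orP [/eqP -> // | /Bh]; rewrite EB.
          by case: (svalP Q) => _ QI _; apply: QI.
        * case: (Atot Q Q' AQ AQ') => /boolp.asboolP hQQ'.
          - exists (sval Q'); split; first by right; exists Q'.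
            move=> w; rewrite in_cons => /orP [/eqP -> | /Bh]; last by rewrite EB.
            exact: hQQ'.
          - exists (sval Q); split; first by right; exists Q.
            move=> w; rewrite in_cons => /orP [/eqP -> // | /Bh]; rewrite EB.
            exact: hQQ'.
    have Bgood : forall B, (B = I \/ exists Q : T, A Q /\ B = sval Q) -> good I B.
      by move=> B [->|[Q [_ ->]]] //; exact: svalP.
    have BU : forall B, (B = I \/ exists Q : T, A Q /\ B = sval Q) ->
        forall d, B d -> U d.
      by move=> B [->|[Q [AQ ->]]] d Bd; [left|right; exists Q].
    have gU : good I U.
      split.
      - split.
        + by left; case: hI.
        + move=> x y Ux Uy.
          have [B [hB HB]] : exists B, (B = I \/ exists Q : T, A Q /\ B = sval Q) /\
                  forall z, z \in [:: x; y] -> B z.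
            by apply: chain => z; rewrite !inE => /orP [/eqP ->|/eqP ->].
          apply: (BU B hB); case: (Bgood B hB) => [[_ BD _] _ _].
          by apply: BD; apply: HB; rewrite !inE eqxx ?orbT.
        + move=> r x [Ix|[Q [AQ Qx]]]; [left|right].
            by case: hI => _ _; apply.
          by exists Q; split => //; case: (svalP Q) => [[_ _ QM] _ _]; apply: QM.
      - by move=> d Id; left.
      - move=> [g [G hg]].
        have [B [hB HB]] : exists B, (B = I \/ exists Q : T, A Q /\ B = sval Q) /\
                  forall z, z \in g -> B z.
          by apply: chain => z zg; have := hg z (dspan_gen zg); rewrite mulr1.
        case: (Bgood B hB) => hBi _ []; exists g; split=> // j hj.
        by rewrite mulr1; apply: (dspan_min hBi HB).
    exists (exist _ U gU) => s As; apply/boolp.asboolP => d sd /=.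
    by right; exists s.
pose P := sval t.
have [hP IP nP] : good I P := svalP t.
have wcP : forall d, wc P d -> P d.
  have gw : good I (wc P).
    split; [exact: wc_ideal| by move=> d /IP; apply: wc_sup| ].
    by move/(wc_wc hP).
  have /boolp.asboolP := tmax (exist _ (wc P) gw) (introT (boolp.asboolP _) (fun d => wc_sup hP)).
  by [].
exists P; split => //; split.
- split=> // x; split.
  + move=> [_ [J [hJ hJx]]].
    have [d xd] : inD x.
      apply: (GV_inv hJ) => j Jj; have [p _ e] := hJx j Jj; move: e; rewrite scaleKo => ->; exact: inD_inK.
    exists d => //; apply: wcP.
    have [g Jg] := GV_eq hJ; subst J; exists g; split => // j Jj.
    have [p Pp] := hJx j Jj; rewrite xd scaleKo -inKM => /inK_inj ->; exact: Pp.
  + move=> [p Pp ->]; split; first by apply: Kspan_self; exists p.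
    exists (dspan [:: 1]); split; first exact: GV_one.
    move=> j _; exists (j * p); last by rewrite scaleKo inKM.
    by case: hP => _ _; apply.
- by move=> hall; apply: nP; apply: wc_sup.
- move=> Q hQw nQ PQ.
  have gQ : good I Q.
    split; [by case: hQw| by move=> d /IP /PQ|].
    move=> [g [G hg]].
    case: (wideal_GV hQw G (fun j hj => eq_ind _ Q (hg j hj) _ (mulr1 j))) => [//|h0].
    apply: nP; exists g; split=> // j hj; rewrite (h0 j hj) mul0r.
    by case: hP.
  have /boolp.asboolP := tmax (exist _ Q gQ) (introT (boolp.asboolP _) PQ).
  by [].
Qed.

Lemma max_exists : exists P : D -> Prop, max_w_ideal P.
Proof.
case: (classic (forall x : K, inD x)) => hf.
  by exists (fun d => d = 0); exact: field_max0.
have hI : is_ideal (fun d : D => d = 0).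
  by split=> // [x y -> ->|r x ->]; rewrite ?addr0 ?mulr0.
have [|P [hP _]] := zorn_max hI; last by exists P.
move=> [g [G hg]]; have [j [hj nj]] := nonfield_GV hf G.
by apply: nj; rewrite -[j]mulr1; apply: hg.
Qed.

Lemma max_prime (P : D -> Prop) a b : max_w_ideal P -> P (a * b) -> P a \/ P b.
Proof.
move=> [[hP hw] nP maxP] Pab.
case: (classic (P a)) => Pa; first by left.
case: (classic (P b)) => Pb; first by right.
exfalso; have [P0 PD PM] := hP.
case: (classic (forall x : K, inD x)) => hf.
  have /eqP := field_ideal0 hf hP nP Pab.
  by rewrite mulf_eq0 => /orP [/eqP a0|/eqP b0]; [apply: Pa; rewrite a0|apply: Pb; rewrite b0].
pose Q := fun d => P (b * d).
have hQ : is_ideal Q.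
  split; rewrite /Q ?mulr0 //.
    by move=> x y Qx Qy; rewrite mulrDr; apply: PD.
  by move=> r x Qx; rewrite mulrCA; apply: PM.
have hQw : w_ideal Q.
  split => // x; split.
  - move=> [_ [J [hJ hJx]]].
    have [d xd] : inD x.
      apply: (GV_inv hJ) => j Jj; have [p _ e] := hJx j Jj; move: e; rewrite scaleKo => ->; exact: inD_inK.
    have qj : forall j, J j -> P (b * (j * d)).
      move=> j Jj; have [q Qq] := hJx j Jj.
      by rewrite xd scaleKo -inKM => /inK_inj ->.
    exists d => //.
    have : imgK P (inK (b * d) : K^o).
      apply/hw; split.
      + have [j [Jj nj]] := nonfield_GV hf hJ.
        exists [:: (inK (b * (j * d)) : K^o)], [:: (inK j)^-1]; split.
          by move=> i; rewrite ltnS leqn0 => /eqP ->; exists (b * (j * d)) => //; apply: qj.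
        rewrite big_ord1 /= scaleKo !inKM mulrCA mulKf //.
        by apply: inK_neq0; apply/eqP.
      + exists J; split=> // j Jj; exists (b * (j * d)); first exact: qj.
        by rewrite scaleKo !inKM mulrCA.
    by move=> [p Pp /inK_inj bd]; rewrite /Q bd.
  - move=> [q Qq ->]; split; first by apply: Kspan_self; exists q.
    exists (dspan [:: 1]); split; first exact: GV_one.
    move=> j _; exists (j * q); last by rewrite scaleKo inKM.
    by rewrite /Q mulrCA; apply: PM.
apply: Pa; apply: (maxP Q hQw).
- by move=> h; apply: Pb; rewrite -[b]mulr1; exact: h 1.
- by move=> d Pd; apply: PM.
- by rewrite /Q mulrC.
Qed.

Lemma max_GV (P J : D -> Prop) : max_w_ideal P -> GV J ->
  (exists j, J j /\ ~ P j) \/ (forall x : K, inD x).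
Proof.
move=> [hw nP _] hJ.
case: (classic (forall x : K, inD x)) => hf; [by right|left].
apply: NNPP => h.
have hJP : forall j, J j -> P j.
  by move=> j Jj; apply: NNPP => nPj; apply: h; exists j.
case: (wideal_GV hw hJ hJP) => [//|h0].
have [j [Jj nj]] := nonfield_GV hf hJ; exact: nj (h0 j Jj).
Qed.

Lemma max_0 (P : D -> Prop) : max_w_ideal P -> P 0.
Proof. by move=> [[[]]]. Qed.
Lemma max_1 (P : D -> Prop) : max_w_ideal P -> ~ P 1.
Proof.
move=> [[[_ _ PM] _] nP _] P1; apply: nP => d; rewrite -[d]mulr1; exact: PM.
Qed.

End Basics.


Section Mod.
Variable D : idomainType.
Local Notation K := {fraction D}.
Variable V : lmodType K.

Lemma span_ind (C : K -> Prop) (N : V -> Prop) (g : seq V) (c : seq K) :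
  N 0 -> (forall x y, N x -> N y -> N (x + y)) ->
  (forall a x, C a -> N x -> N (a *: x)) ->
  (forall i, (i < size g)%N -> N g`_i) -> (forall i, (i < size g)%N -> C c`_i) ->
  N (\sum_(i < size g) c`_i *: g`_i).
Proof.
move=> N0 ND NZ Ng Cc; apply: big_ind => // i _.
by apply: NZ; [apply: Cc|apply: Ng]; exact: ltn_ord.
Qed.

Lemma wcl_mono (A B : V -> Prop) : Defs.subset A B -> Defs.subset (wcl A) (wcl B).
Proof.
move=> AB x [[g [c [hg ->]]] [J [hJ hJx]]]; split.
  by exists g, c; split=> // i hi; apply: AB; apply: hg.
by exists J; split=> // j Jj; apply: AB; apply: hJx.
Qed.

Lemma wcl_self (N : V -> Prop) x : submod N -> N x -> wcl N x.
Proof.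
move=> [_ _ NZ] Nx; split; first exact: Kspan_self.
by exists (dspan [:: 1]); split; [exact: GV_one| move=> j _; apply: NZ].
Qed.

Lemma Dspan_submod (g : seq V) : submod (Dspan g).
Proof.
split.
- by exists [::]; rewrite big1 // => i _; rewrite nth_nil inK0 scale0r.
- move=> x y [r1 ->] [r2 ->].
  exists (mkseq (fun i => r1`_i + r2`_i) (size g)).
  rewrite -big_split /=; apply: eq_bigr => i _.
  by rewrite nth_mkseq ?ltn_ord // inKD scalerDl.
- move=> d x [r ->]; exists (mkseq (fun i => d * r`_i) (size g)).
  rewrite scaler_sumr; apply: eq_bigr => i _.
  by rewrite nth_mkseq ?ltn_ord // inKM scalerA.
Qed.

Lemma Dspan_gen (g : seq V) z : z \in g -> Dspan g z.
Proof.
move=> zg; have hk := zg; rewrite -index_mem in hk.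
exists (mkseq (fun i => (i == index z g)%:R) (size g)).
rewrite (bigD1 (Ordinal hk)) //= big1 ?addr0.
  by rewrite nth_mkseq // eqxx inK1 scale1r nth_index.
move=> i /eqP neq; rewrite nth_mkseq ?ltn_ord //.
case: eqP => [h|_]; last by rewrite inK0 scale0r.
by exfalso; apply: neq; apply: val_inj.
Qed.

Lemma Dspan_min (g : seq V) (N : V -> Prop) : submod N ->
  (forall z, z \in g -> N z) -> Defs.subset (Dspan g) N.
Proof.
move=> [N0 ND NZ] Ng x [r ->]; apply: big_ind => // i _.
by apply: NZ; apply: Ng; apply: mem_nth.
Qed.

Variable P : D -> Prop.
Hypothesis hP : max_w_ideal P.

Lemma nP_neq0 b : ~ P b -> inK b != 0.
Proof.
move=> nb; apply: inK_neq0; apply/eqP => b0; apply: nb; rewrite b0; exact: max_0 hP.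
Qed.

Lemma nP_mul b e : ~ P b -> ~ P e -> ~ P (b * e).
Proof. by move=> nb ne /(max_prime hP) []. Qed.

Lemma Dloc_inK d : Dloc P (inK d).
Proof. by exists d, 1; split; [exact: max_1 hP| rewrite inK1 divr1]. Qed.

Lemma Dloc_inv b : ~ P b -> Dloc P (inK b)^-1.
Proof. by move=> nb; exists 1, b; split; rewrite // inK1 mul1r. Qed.

Lemma Dloc_add x y : Dloc P x -> Dloc P y -> Dloc P (x + y).
Proof.
move=> [a [b [nb ->]]] [c [e [ne ->]]]; exists (a * e + c * b), (b * e).
split; first exact: nP_mul.
by rewrite addf_div ?nP_neq0 // inKD !inKM.
Qed.

Lemma Dloc_mul x y : Dloc P x -> Dloc P y -> Dloc P (x * y).
Proof.
move=> [a [b [nb ->]]] [c [e [ne ->]]]; exists (a * c), (b * e).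
by split; [exact: nP_mul| rewrite mulf_div !inKM].
Qed.

Lemma Dlocspan_submod (g : seq V) : submod_loc P (Dlocspan P g).
Proof.
split.
- exists [::]; split; first by move=> i _; rewrite nth_nil -inK0; exact: Dloc_inK.
  by rewrite big1 // => i _; rewrite nth_nil scale0r.
- move=> x y [r1 [h1 ->]] [r2 [h2 ->]].
  exists (mkseq (fun i => r1`_i + r2`_i) (size g)); split.
    by move=> i hi; rewrite nth_mkseq //; apply: Dloc_add; [apply: h1|apply: h2].
  rewrite -big_split /=; apply: eq_bigr => i _.
  by rewrite nth_mkseq ?ltn_ord // scalerDl.
- move=> d x hd [r [h ->]]; exists (mkseq (fun i => d * r`_i) (size g)); split.
    by move=> i hi; rewrite nth_mkseq //; apply: Dloc_mul => //; apply: h.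
  rewrite scaler_sumr; apply: eq_bigr => i _.
  by rewrite nth_mkseq ?ltn_ord // scalerA.
Qed.

Lemma Dlocspan_min (g : seq V) (N : V -> Prop) : submod_loc P N ->
  (forall z, z \in g -> N z) -> Defs.subset (Dlocspan P g) N.
Proof.
move=> [N0 ND NZ] Ng x [r [hr ->]]; apply: (@span_ind (Dloc P)) => //.
by move=> i hi; apply: Ng; apply: mem_nth.
Qed.

Lemma Dloc0 : Dloc P 0. Proof. by rewrite -inK0; exact: Dloc_inK. Qed.
Lemma Dloc1 : Dloc P 1. Proof. by rewrite -inK1; exact: Dloc_inK. Qed.

Lemma Dlocspan_gen (g : seq V) z : z \in g -> Dlocspan P g z.
Proof.
move=> zg; have hk := zg; rewrite -index_mem in hk.
exists (mkseq (fun i => (i == index z g)%:R) (size g)); split.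
  by move=> i hi; rewrite nth_mkseq //; case: eqP => _; [exact: Dloc1|exact: Dloc0].
rewrite (bigD1 (Ordinal hk)) //= big1 ?addr0.
  by rewrite nth_mkseq // eqxx scale1r nth_index.
move=> i /eqP neq; rewrite nth_mkseq ?ltn_ord //.
case: eqP => [h|_]; last by rewrite scale0r.
by exfalso; apply: neq; apply: val_inj.
Qed.

Lemma Dspan_loc (g : seq V) : Defs.subset (Dspan g) (Dlocspan P g).
Proof.
have [L0 LD LZ] := Dlocspan_submod g.
apply: Dspan_min; last by move=> z; exact: Dlocspan_gen.
by split => // d x; apply: LZ; exact: Dloc_inK.
Qed.

Lemma Mloc_submod (L : V -> Prop) : submod L -> submod_loc P (Mloc P L).
Proof.
move=> [L0 LD LZ]; have n1 := max_1 hP; split.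
- by exists 0, 1; split; rewrite // scaler0.
- move=> _ _ [x [b [Lx nb ->]]] [y [e [Ly ne ->]]].
  exists (inK e *: x + inK b *: y), (b * e); split; first by apply: LD; apply: LZ.
    exact: nP_mul.
  rewrite scalerDr !scalerA inKM invfM -mulrA mulVf ?nP_neq0 // mulr1.
  by rewrite [_^-1 * _]mulrC -mulrA mulVf ?nP_neq0 // mulr1.
- move=> r _ [a [e [ne ->]]] [x [b [Lx nb ->]]].
  exists (inK a *: x), (e * b); split; [by apply: LZ| exact: nP_mul|].
  rewrite !scalerA inKM invfM; congr (_ *: _); by rewrite [RHS]mulrC mulrA.
Qed.

Lemma clear_submod (N : V -> Prop) : submod N ->
  submod_loc P (fun w => exists d, ~ P d /\ N (inK d *: w)).
Proof.
move=> [N0 ND NZ]; split.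
- by exists 1; split; [exact: max_1 hP| rewrite scaler0].
- move=> x y [d1 [n1 h1]] [d2 [n2 h2]]; exists (d1 * d2); split; first exact: nP_mul.
  rewrite scalerDr inKM -!scalerA; apply: ND; last exact: NZ h2.
  by rewrite !scalerA mulrC -scalerA; apply: NZ.
- move=> r x [a [b [nb ->]]] [d [nd h]]; exists (b * d); split; first exact: nP_mul.
  by rewrite scalerA inKM mulrC mulrA divfK ?nP_neq0 // -scalerA; apply: NZ.
Qed.

End Mod.


Section Parts.
Variable D : idomainType.
Local Notation K := {fraction D}.
Variable V : lmodType K.

Lemma part1 (S : D -> Prop) (M : V -> Prop) :
  submod M -> is_wmod M -> S_SM S M -> w_loc_S_noeth S M.
Proof.
move=> hM wM hSM P hP Lp hLp LpM.
have [L0 LD LZ] := hLp.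
pose N := fun x => Lp x /\ M x.
have [M0 MD MZ] := hM.
have hN : submod N.
  split; first by split.
    by move=> x y [? ?] [? ?]; split; [apply: LD|apply: MD].
  move=> d x [Lx Mx]; split; last exact: MZ.
  by apply: (LZ) Lx; exact: (Dloc_inK hP d).
have NM : Defs.subset N M by move=> x [].
have fieldK : (forall x : K, inD x) -> forall x, Kspan N x -> Lp x.
  move=> hf x [g [c [hg ->]]]; apply: (@span_ind _ _ (Dloc P)) => //.
  - by move=> i hi; case: (hg i hi).
  - by move=> i hi; have [e ->] := hf c`_i; exact: (Dloc_inK hP e).
have wN : is_wmod N.
  move=> x; split; last exact: (wcl_self hN).
  move=> hx; have Mx : M x by apply/wM; exact: (wcl_mono NM hx).
  split => //.
  have [Kx [J [hJ hJx]]] := hx.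
  case: (max_GV hP hJ) => [[j [Jj nPj]] | hf]; last exact: (fieldK hf x Kx).
  have := LZ _ _ (Dloc_inv nPj) (proj1 (hJx j Jj)).
  by rewrite scalerA mulVf ?scale1r // (nP_neq0 hP nPj).
have [s [Ss [g [gM [hs hsub]]]]] := hSM N hN NM wN.
have gN : forall z, z \in g -> N z.
  move=> z zg; apply/wN; apply: hsub; apply: wcl_self; [exact: Dspan_submod| exact: Dspan_gen].
exists s; split => //; exists g; split; last first.
  by apply: Dlocspan_min => // z /gN [].
move=> v Lpv; have [x [b [Mx nb vE]]] := LpM v Lpv.
have Nx : N x.
  split => //; have := LZ (inK b) v (Dloc_inK hP b) Lpv.
  by rewrite vE scalerA mulfV ?scale1r // (nP_neq0 hP nb).
have [Kx [J [hJ hJx]]] := hs x Nx.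
have [G0 GD GZ] := Dlocspan_submod hP g.
case: (max_GV hP hJ) => [[j [Jj nPj]] | hf].
  have := GZ _ _ (Dloc_inv (nP_mul hP nPj nb)) (Dspan_loc hP (hJx j Jj)).
  congr (Dlocspan P g _); rewrite vE !scalerA; congr (_ *: _).
  by rewrite inKM invfM [(inK j)^-1 / inK b * inK j]mulrAC mulVf ?(nP_neq0 hP nPj) // mul1r mulrC.
have : Dlocspan P g (inK s *: x).
  move: Kx => [h [c [hh ->]]]; apply: (@span_ind _ _ (Dloc P)) => //.
  - by move=> i hi; exact: (Dspan_loc hP (hh i hi)).
  - by move=> i hi; have [e ->] := hf c`_i; exact: (Dloc_inK hP e).
move/(GZ _ _ (Dloc_inv nb)); congr (Dlocspan P g _).
by rewrite vE !scalerA mulrC.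
Qed.


Lemma lift_list (L : V -> Prop) (Q : V -> V -> Prop) (h : seq V) :
  (forall z, z \in h -> exists x, L x /\ Q z x) ->
  exists h' : seq V, (forall x, x \in h' -> L x) /\ forall z, z \in h -> exists2 x, x \in h' & Q z x.
Proof.
elim: h => [|z h IH] hh; first by exists [::]; split.
have [h' [h'L h'Q]] : exists h' : seq V, (forall x, x \in h' -> L x) /\
    forall z, z \in h -> exists2 x, x \in h' & Q z x.
  by apply: IH => w wh; apply: hh; rewrite in_cons wh orbT.
have [x [Lx Qx]] := hh z (mem_head _ _).
exists (x :: h'); split.
  by move=> y; rewrite in_cons => /orP [/eqP ->|/h'L].
move=> w; rewrite in_cons => /orP [/eqP ->|/h'Q [y yh Qy]].
  by exists x; rewrite ?mem_head.
by exists y; rewrite // in_cons yh orbT.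
Qed.

Lemma local_data (S : D -> Prop) (M L : V -> Prop) (P : D -> Prop) :
  max_w_ideal P -> S_noeth_loc S P M -> submod L -> Defs.subset L M ->
  exists s, exists h : seq V, [/\ S s, (forall z, z \in h -> L z) &
    forall v, L v -> exists d, ~ P d /\ Dspan h (inK d *: (inK s *: v))].
Proof.
move=> hP hloc hL LM.
have LlocM : Defs.subset (Mloc P L) (Mloc P M).
  by move=> _ [x [b [Lx nb ->]]]; exists x, b; split => //; apply: LM.
have [s [Ss [h [hs hsub]]]] := hloc (Mloc P L) (Mloc_submod hP hL) LlocM.
have [h' [h'L h'Q]] : exists h' : seq V, (forall x, x \in h' -> L x) /\
    forall z, z \in h -> exists2 x, x \in h' & (exists b, ~ P b /\ inK b *: z = x).
  apply: lift_list => z zh.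
  have [x [b [Lx nb ze]]] := hsub z (Dlocspan_gen hP zh).
  exists x; split => //; exists b; split => //.
  by rewrite ze scalerA mulfV ?scale1r // (nP_neq0 hP nb).
exists s, h'; split => // v Lv.
have hT := clear_submod hP (Dspan_submod h').
have hTh : forall z, z \in h -> exists d, ~ P d /\ Dspan h' (inK d *: z).
  move=> z zh; have [x xh [b [nb e]]] := h'Q z zh.
  by exists b; split => //; rewrite e; apply: Dspan_gen.
apply: (Dlocspan_min hT hTh); apply: hs; exists v, 1; split => //.
  exact: (max_1 hP).
by rewrite inK1 invr1 scale1r.
Qed.


Lemma part2 (S : D -> Prop) (M : V -> Prop) : mult_subset S ->
  submod M -> w_loc_S_noeth S M -> fin_w_char M -> S_SM S M.
Proof.
move=> [S1 SM] hM hloc hfin L hL LM wL.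
have [L0 LD LZ] := hL.
have FL : forall F : seq V, (forall z, z \in F -> L z) ->
    Defs.subset (wcl (Dspan F)) (wcl L).
  by move=> F FL; apply: wcl_mono; apply: Dspan_min.
case: (classic (exists a, L a /\ a <> 0)) => [[a [La na]] | h0]; last first.
  exists 1; split => //; exists [::]; split; first by case.
  split; last by apply: FL.
  move=> n Ln; have -> : n = 0 by apply: NNPP => nn; apply: h0; exists n.
  rewrite scaler0; apply: wcl_self; first exact: Dspan_submod.
  by case: (Dspan_submod ([::] : seq V)).
have [n [f hf]] : exists (n : nat) (f : 'I_n -> D -> Prop),
    forall P, max_w_ideal P -> (forall d, colon a M d -> P d) ->
      exists i, forall d, P d <-> f i d.
  case: (classic (forall d, colon a M d)) => hc; last exact: hfin a (LM a La) na hc.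
  by exists 0, (fun _ _ => True) => P hP hPc; exfalso; exact: max_1 hP (hPc 1 (hc 1)).
have data : forall i : 'I_n, exists s, exists h : seq V, [/\ S s,
    (forall z, z \in h -> L z) &
    (max_w_ideal (f i) -> forall v, L v ->
       exists d, ~ f i d /\ Dspan h (inK d *: (inK s *: v)))].
  move=> i; case: (classic (max_w_ideal (f i))) => hPi; last first.
    by exists 1, [::]; split.
  have [s [h [Ss hL' hv]]] := local_data hPi (hloc _ hPi) hL LM.
  by exists s, h; split.
pose sf i := proj1_sig (constructive_indefinite_description _ (data i)).
pose hfn i := proj1_sig (constructive_indefinite_description _
                 (proj2_sig (constructive_indefinite_description _ (data i)))).
have hdat : forall i, [/\ S (sf i), (forall z, z \in hfn i -> L z) &
    (max_w_ideal (f i) -> forall v, L v ->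
       exists d, ~ f i d /\ Dspan (hfn i) (inK d *: (inK (sf i) *: v)))].
  move=> i; exact: (proj2_sig (constructive_indefinite_description _
                 (proj2_sig (constructive_indefinite_description _ (data i))))).
pose s := \prod_(i < n) sf i.
pose F := a :: flatten [seq hfn i | i <- enum 'I_n].
have Ss : S s by apply: big_ind => // i _; case: (hdat i).
have FinL : forall z, z \in F -> L z.
  move=> z; rewrite in_cons => /orP [/eqP -> // | /flattenP [h /mapP [i _ ->]]].
  by case: (hdat i) => _ hi _; apply: hi.
have hF : forall i, Defs.subset (Dspan (hfn i)) (Dspan F).
  move=> i; apply: Dspan_min; first exact: Dspan_submod.
  move=> z zh; apply: Dspan_gen; rewrite in_cons; apply/orP; right.
  by apply/flattenP; exists (hfn i) => //; apply: map_f; rewrite mem_enum.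
have [F0 FD FZ] := Dspan_submod F.
exists s; split => //; exists F; split.
  by move=> i hi; apply: LM; apply: FinL; apply: mem_nth.
split; last by apply: FL.
move=> x Lx; pose y := inK s *: x.
have loc : forall P, max_w_ideal P -> exists d, ~ P d /\ Dspan F (inK d *: y).
  move=> P hP; case: (classic (forall d, colon a M d -> P d)) => hc.
    have [i hi] := hf P hP hc.
    have Pf : P = f i.
      by apply: functional_extensionality => d; apply: propositional_extensionality.
    subst P; case: (hdat i) => _ _ /(_ hP x Lx) [d [nd hd]].
    exists d; split => //.
    have := FZ (\prod_(j < n | j != i) sf j) _ (hF i _ hd).
    congr (Dspan F _); rewrite /y /s [in RHS](bigD1 i) //= !scalerA; congr (_ *: _).
    by rewrite inKM [inK (sf i) * _]mulrC mulrA [inK d * _]mulrC.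
  have [d [cd nd]] : exists d, colon a M d /\ ~ P d.
    apply: NNPP => h; apply: hc => d cd; apply: NNPP => nd; apply: h; by exists d.
  exists d; split => //.
  have [e xe] := cd x (LM x Lx).
  rewrite /y scalerA mulrC -scalerA xe scalerA -inKM.
  by apply: FZ; apply: Dspan_gen; rewrite mem_head.
pose I := fun d => Dspan F (inK d *: y).
have hI : is_ideal I.
  split; rewrite /I.
  - by rewrite inK0 scale0r.
  - by move=> u w hu hw; rewrite inKD scalerDl; apply: FD.
  - by move=> r u hu; rewrite inKM -scalerA; apply: FZ.
have wI : wc I 1.
  apply: NNPP => nI; have [P [hP IP]] := zorn_max hI nI.
  by have [d [nd hd]] := loc P hP; apply: nd; apply: IP.
have [g [G hg]] := wI.
split.
  have [P0 hP0] := max_exists D.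
  have [d [nd hd]] := loc P0 hP0.
  exists [:: inK d *: y], [:: (inK d)^-1]; split.
    by move=> i; rewrite ltnS leqn0 => /eqP ->.
  by rewrite big_ord1 /= scalerA mulVf ?scale1r // (nP_neq0 hP0 nd).
exists (dspan g); split => // j hj; have := hg j hj; by rewrite /I mulr1.
Qed.

End Parts.


Theorem proposition3p5 (D : idomainType) (V : lmodType {fraction D})
  (S : D -> Prop) (M : V -> Prop) :
  mult_subset S -> submod M -> is_wmod M ->
  (S_SM S M -> w_loc_S_noeth S M) /\
  (w_loc_S_noeth S M -> fin_w_char M -> S_SM S M).
Proof.
move=> hS hM wM; split.
- exact: part1.
- by move=> h1 h2; apply: part2.
Qed.
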